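(* A Hausdorff convergence $\xi$ is strongly countably $\mathrm{S}_0$-characterized if and only if it has countable $\mathrm{S}_0$-character and is strongly sequential.
   Context: A convergence $\xi$ on a set $X$ is a relation between filters and points, $x\in\lim_\xi\mathcal{F}$, isotone in $\mathcal{F}$ with $x\in\lim_\xi\{x\}^\uparrow$; $\xi\ge\theta$ means $\lim_\xi\mathcal{F}\subset\lim_\theta\mathcal{F}$ for all $\mathcal{F}$. Hausdorff: each filter has at most one limit. Vicinity filter $\mathcal{V}_\xi(x)$: intersection of filters converging to $x$; pretopology: $x\in\lim_\xi\mathcal{V}_\xi(x)$ for all $x$. $\mathrm{T}\xi$: topology of $\xi$-open sets ($O$ with $\lim_\xi\mathcal{F}\cap O\ne\emptyset\Rightarrow O\in\mathcal{F}$). $x\in\lim_{\mathrm{I}_1\xi}\mathcal{F}$ iff some countably based $\mathcal{H}\le\mathcal{F}$ has $x\in\lim_\xi\mathcal{H}$; countable character: $\xi=\mathrm{I}_1\xi$. The product $\xi\times\tau$ is the convergence on $|\xi|\times|\tau|$ in which a filter converges to $(x,y)$ iff its projections converge to $x$ and $y$. For a convergence $\xi$, $\mathrm{Epi}_{\mathrm{I}_1}\xi$ is the coarsest convergence $\theta$ on $|\xi|$ such that $\mathrm{T}(\xi\times\tau)=\mathrm{T}(\theta\times\tau)$ for every convergence $\tau$ of countable character; equivalently, $\theta\ge\mathrm{Epi}_{\mathrm{I}_1}\xi$ iff $\theta\times\tau\ge\mathrm{T}(\xi\times\tau)$ for every prime metrizable topology $\tau$ (a topology is prime if it has at most one non-isolated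 point). One has $\xi\ge\mathrm{Epi}_{\mathrm{I}_1}\xi\ge\mathrm{T}\xi$. $\xi$ is strongly sequential if $\xi\ge\mathrm{Epi}_{\mathrm{I}_1}\mathrm{I}_1\xi$. $\xi$ has countable $\mathrm{S}_0$-character if some pretopology $\sigma$ of countable character satisfies $\sigma\ge\xi\ge\mathrm{T}\sigma$, and is strongly countably $\mathrm{S}_0$-characterized if some pretopology $\sigma$ of countable character satisfies $\sigma\ge\xi\ge\mathrm{Epi}_{\mathrm{I}_1}\sigma$. *)

(* Defs.v *)
From Stdlib Require Import Classical.
Set Implicit Arguments.

Record filter (X : Type) := Filter {
  fsets :> (X -> Prop) -> Prop;
  f_full : fsets (fun _ => True);
  f_up : forall A B : X -> Prop, (forall x, A x -> B x) -> fsets A -> fsets B;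
  f_meet : forall A B : X -> Prop, fsets A -> fsets B -> fsets (fun x => A x /\ B x);
  f_proper : ~ fsets (fun _ => False)
}.

Definition fle (X : Type) (F G : filter X) : Prop := forall A, F A -> G A.

Definition principal (X : Type) (x : X) : filter X.
Proof.
  refine (@Filter X (fun A => A x) _ _ _ _); simpl; auto.
Defined.

Definition fmap (X Y : Type) (f : X -> Y) (F : filter X) : filter Y.
Proof.
  refine (@Filter Y (fun A => F (fun z => A (f z))) _ _ _ _).
  - apply f_full.
  - intros A B HAB HA. apply (f_up F (fun z => A (f z))); auto.
  - intros A B HA HB. apply (f_meet F _ _ HA HB).
  - apply f_proper.
Defined.

Definition countably_based (X : Type) (H : filter X) : Prop :=
  exists B : nat -> X -> Prop,
    (forall n, H (B n)) /\
    (forall A, H A -> exists n, forall x, B n x -> A x).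

Record convergence (X : Type) := Convergence {
  lim : filter X -> X -> Prop;
  lim_iso : forall (F G : filter X) x, fle F G -> lim F x -> lim G x;
  lim_centered : forall x, lim (principal x) x
}.

Definition finer (X : Type) (xi theta : convergence X) : Prop :=
  forall F x, lim xi F x -> lim theta F x.

Definition same_conv (X : Type) (xi theta : convergence X) : Prop :=
  forall F x, lim xi F x <-> lim theta F x.

Definition hausdorff (X : Type) (xi : convergence X) : Prop :=
  forall F x y, lim xi F x -> lim xi F y -> x = y.

Definition vicinity (X : Type) (xi : convergence X) (x : X) : filter X.
Proof.
  refine (@Filter X (fun A => forall F, lim xi F x -> F A) _ _ _ _).
  - intros F _. apply f_full.
  - intros A B HAB HA F HF. exact (f_up F A B HAB (HA F HF)).
  - intros A B HA HB F HF. exact (f_meet F _ _ (HA F HF) (HB F HF)).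
  - intros H. exact (H (principal x) (lim_centered xi x)).
Defined.

Definition pretopology (X : Type) (xi : convergence X) : Prop :=
  forall x, lim xi (vicinity xi x) x.

Definition is_open (X : Type) (xi : convergence X) (O : X -> Prop) : Prop :=
  forall F x, lim xi F x -> O x -> F O.

Definition Tmod (X : Type) (xi : convergence X) : convergence X.
Proof.
  refine (@Convergence X (fun F x => forall O, is_open xi O -> O x -> F O) _ _).
  - intros F G x HFG H O HO Ox. exact (HFG O (H O HO Ox)).
  - intros x O _ Ox. exact Ox.
Defined.

Definition I1 (X : Type) (xi : convergence X) : convergence X.
Proof.
  refine (@Convergence X
    (fun F x => exists H : filter X, countably_based H /\ fle H F /\ lim xi H x) _ _).
  - intros F G x HFG [H [Hc [HHF Hl]]]. exists H; split; [|split]; auto.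
    intros A HA; exact (HFG A (HHF A HA)).
  - intros x. exists (principal x); split; [|split].
    + exists (fun _ z => z = x). split.
      * intros n. simpl. reflexivity.
      * intros A HA. exists 0. intros z ->. exact HA.
    + intros A HA; exact HA.
    + apply lim_centered.
Defined.

Definition countable_character (X : Type) (xi : convergence X) : Prop :=
  same_conv xi (I1 xi).

Definition prod_conv (X Y : Type) (xi : convergence X) (tau : convergence Y)
  : convergence (X * Y).
Proof.
  refine (@Convergence (X * Y)
    (fun F p => lim xi (fmap fst F) (fst p) /\ lim tau (fmap snd F) (snd p)) _ _).
  - intros F G p HFG [H1 H2]. split.
    + apply (@lim_iso _ xi (fmap fst F)); auto. intros A HA; exact (HFG _ HA).
    + apply (@lim_iso _ tau (fmap snd F)); auto. intros A HA; exact (HFG _ HA).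
  - intros [x y]. split.
    + apply (@lim_iso _ xi (principal x)); [|apply lim_centered]. intros A HA; exact HA.
    + apply (@lim_iso _ tau (principal y)); [|apply lim_centered]. intros A HA; exact HA.
Defined.

(** T(xi x tau) = T(theta x tau): same open sets *)
Definition same_topology (Z : Type) (a b : convergence Z) : Prop :=
  forall O, is_open a O <-> is_open b O.

Definition epi_I1_class (X : Type) (xi theta : convergence X) : Prop :=
  forall (Y : Type) (tau : convergence Y), countable_character tau ->
    same_topology (prod_conv xi tau) (prod_conv theta tau).

(** Epi_{I_1} xi: the coarsest convergence of that class, i.e. the infimum
    (pointwise union of limits) of the class. *)
Definition Epi_I1 (X : Type) (xi : convergence X) : convergence X.
Proof.
  refine (@Convergence X
    (fun F x => exists theta : convergence X, epi_I1_class xi theta /\ lim theta F x) _ _).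
  - intros F G x HFG [th [Hc Hl]]. exists th; split; auto.
    exact (@lim_iso _ th F G x HFG Hl).
  - intros x. exists xi; split; [|apply lim_centered].
    intros Y tau _ O; tauto.
Defined.

Definition strongly_sequential (X : Type) (xi : convergence X) : Prop :=
  finer xi (Epi_I1 (I1 xi)).

Definition countable_S0_character (X : Type) (xi : convergence X) : Prop :=
  exists sigma : convergence X,
    pretopology sigma /\ countable_character sigma /\
    finer sigma xi /\ finer xi (Tmod sigma).

Definition strongly_countably_S0_characterized (X : Type) (xi : convergence X) : Prop :=
  exists sigma : convergence X,
    pretopology sigma /\ countable_character sigma /\
    finer sigma xi /\ finer xi (Epi_I1 sigma).

(* Main.v *)
Require Import Defs.
From Stdlib Require Import ClassicalEpsilon Classical Lia Arith.

Lemma choice_nat {A : Type} (P : nat -> A -> Prop) :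
  (forall n, exists a, P n a) -> exists f, forall n, P n (f n).
Proof.
  intros H. exists (fun n => proj1_sig (constructive_indefinite_description _ (H n))).
  intro n. exact (proj2_sig (constructive_indefinite_description _ (H n))).
Qed.

Definition tailf {X : Type} (s : nat -> X) : filter X.
Proof.
  refine (@Filter X (fun A => exists N, forall n, N <= n -> A (s n)) _ _ _ _).
  - exists 0; auto.
  - intros A B HAB [N HN]; exists N; auto.
  - intros A B [N1 H1] [N2 H2]; exists (max N1 N2); intros n Hn; split;
      [apply H1|apply H2]; lia.
  - intros [N HN]; exact (HN N (le_n N)).
Defined.

Fixpoint decb {X : Type} (B : nat -> X -> Prop) (n : nat) : X -> Prop :=
  match n with 0 => B 0 | S k => fun z => decb B k z /\ B (S k) z end.

Lemma dec_base {X : Type} {H : filter X} : countably_based H ->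
  exists D : nat -> X -> Prop, (forall n, H (D n)) /\
    (forall n m z, n <= m -> D m z -> D n z) /\
    (forall A, H A -> exists n, forall z, D n z -> A z).
Proof.
  intros [B [HB1 HB2]]. exists (decb B). split; [|split].
  - induction n; simpl. apply HB1. apply f_meet; auto.
  - intros n m z Hnm. induction Hnm; auto. simpl. intros [h _]; auto.
  - intros A HA. destruct (HB2 A HA) as [n Hn]. exists n. intros z Hz.
    apply Hn. destruct n; simpl in Hz; tauto.
Qed.

Lemma tail_fle {X : Type} {H : filter X} {D : nat -> X -> Prop} {s : nat -> X} :
  (forall A, H A -> exists n, forall z, D n z -> A z) ->
  (forall n m z, n <= m -> D m z -> D n z) ->
  (forall n, D n (s n)) -> fle H (tailf s).
Proof.
  intros Hb Hm Hs A HA. destruct (Hb A HA) as [N HN]. exists N.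
  intros n Hn. apply HN. apply (Hm N n); auto.
Qed.

Lemma finite_max (P : nat -> nat -> Prop) (j : nat) :
  (forall i k k', k <= k' -> P i k -> P i k') ->
  (forall i, i < j -> exists k, P i k) -> exists K, forall i, i < j -> P i K.
Proof.
  intros Hm. induction j; intros Hj.
  - exists 0; intros; lia.
  - destruct IHj as [K HK]. intros i Hi; apply Hj; lia.
    destruct (Hj j (le_n _)) as [k Hk]. exists (max K k). intros i Hi.
    destruct (Nat.eq_dec i j) as [->|Hne].
    + apply (Hm j k); auto; lia.
    + apply (Hm i K); [lia|]. apply HK; lia.
Qed.

Lemma hard (X Y : Type) (xi sigma : convergence X) (tau : convergence Y) :
  hausdorff xi -> pretopology sigma -> countable_character sigma ->
  finer sigma xi -> finer xi (Tmod sigma) -> countable_character tau ->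
  forall O, is_open (prod_conv sigma tau) O -> is_open (prod_conv (I1 xi) tau) O.
Proof.
  intros Hh Hp Hcs Hsx Hxt Hct O HO F [x y] [Hf Hs] Hxy. simpl in Hf, Hs.
  destruct Hf as [H [Hcb [HHF HHx]]].
  destruct (proj1 (Hct _ _) Hs) as [K [Hkb [HKF HKy]]].
  destruct (dec_base Hcb) as [DA [DAin [DAmono DAbase]]].
  destruct (dec_base Hkb) as [DB [DBin [DBmono DBbase]]].
  apply NNPP; intro HnF.
  assert (Hex: forall n, exists p : X*Y, DA n (fst p) /\ DB n (snd p) /\ ~ O p).
  { intro n. apply NNPP; intro Hno. apply HnF.
    apply (f_up F (fun p => DA n (fst p) /\ DB n (snd p))).
    - intros p [h1 h2]. apply NNPP; intro hO. apply Hno. exists p; auto.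
    - apply f_meet. exact (HHF _ (DAin n)). exact (HKF _ (DBin n)). }
  destruct (choice_nat _ Hex) as [p Hp'].
  pose (a := fun n => fst (p n)); pose (b := fun n => snd (p n)).
  assert (Ha : forall n, DA n (a n)) by (intro n; apply Hp').
  assert (Hb : forall n, DB n (b n)) by (intro n; apply Hp').
  assert (Hno : forall n, ~ O (a n, b n)).
  { intro n. unfold a, b. rewrite <- surjective_pairing. apply Hp'. }
  clearbody a b. clear Hp' Hex p.
  assert (Hprod : forall (c : nat -> X) (d : nat -> Y) (z : X),
             lim sigma (tailf c) z -> lim tau (tailf d) y ->
             O (z, y) -> exists N, forall n, N <= n -> O (c n, d n)).
  { intros c d z Hc Hd Hz.
    exact (HO (tailf (fun n => (c n, d n))) (z, y)
              (conj (lim_iso sigma z (fun A h => h) Hc)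
                    (lim_iso tau y (fun A h => h) Hd)) Hz). }
  assert (Htb : forall d : nat -> Y, (forall n, DB n (d n)) -> lim tau (tailf d) y).
  { intros d Hd. apply (lim_iso tau y (tail_fle DBbase DBmono Hd)). exact HKy. }
  assert (Hta : lim xi (tailf a) x).
  { apply (lim_iso xi x (tail_fle DAbase DAmono Ha)). exact HHx. }
  pose (U := fun z => O (z, y) /\ exists N, forall n, N <= n -> O (z, b n)).
  pose (A' := fun z => exists n, z = a n /\ a n <> x).
  pose (V := fun z => U z /\ ~ A' z).
  assert (HUx : U x).
  { split; auto.
    assert (Hc : lim sigma (tailf (fun _ : nat => x)) x).
    { apply (lim_iso sigma x (F := principal x)); [|apply lim_centered].
      intros A HA. exists 0; auto. }
    exact (Hprod _ _ x Hc (Htb b Hb) Hxy). }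
  assert (HVopen : is_open sigma V).
  { intros G z HG Vz.
    destruct (proj1 (Hcs _ _) (Hp z)) as [W [Hwb [HWV HWz]]].
    destruct (dec_base Hwb) as [DW [DWin [DWmono DWbase]]].
    assert (HWU : W U).
    { apply NNPP; intro HnW.
      assert (Hc : forall k, exists c, DW k c /\ ~ U c).
      { intro k. apply NNPP; intro Hk. apply HnW.
        apply (f_up W (DW k)); [|apply DWin].
        intros c hc. apply NNPP; intro hu. apply Hk; eauto. }
      destruct (choice_nat _ Hc) as [c Hc'].
      assert (Hcz : lim sigma (tailf c) z).
      { apply (lim_iso sigma z (tail_fle DWbase DWmono (fun k => proj1 (Hc' k)))).
        exact HWz. }
      destruct Vz as [[Uz1 _] _].
      destruct (classic (exists k0, forall k, k0 <= k -> ~ O (c k, y))) as [[k0 Hk0]|Hn].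
      - assert (Hy : lim tau (tailf (fun _ : nat => y)) y).
        { apply (lim_iso tau y (F := principal y)); [|apply lim_centered].
          intros A HA. exists 0; auto. }
        destruct (Hprod c _ z Hcz Hy Uz1) as [N HN].
        apply (Hk0 (max N k0)); [lia|]. apply HN; lia.
      - assert (Hq : forall j, exists kn : nat * nat,
                   j <= fst kn /\ fst kn <= snd kn /\ ~ O (c (fst kn), b (snd kn))).
        { intro j. apply NNPP; intro Hj. apply Hn. exists j. intros k Hk HOk.
          apply (proj2 (Hc' k)). split; auto. exists k. intros n Hn'.
          apply NNPP; intro HOn. apply Hj. exists (k, n); simpl; auto. }
        destruct (choice_nat _ Hq) as [q Hq'].
        assert (H1 : lim sigma (tailf (fun j => c (fst (q j)))) z).
        { apply (lim_iso sigma z (tail_fle DWbase DWmono (s := fun j => c (fst (q j))) 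
                    (fun j => DWmono j (fst (q j)) _ (proj1 (Hq' j)) (proj1 (Hc' _))))).
          exact HWz. }
        assert (H2 : lim tau (tailf (fun j => b (snd (q j)))) y).
        { apply Htb. intro j. apply (DBmono j (snd (q j))); [|apply Hb].
          destruct (Hq' j); lia. }
        destruct (Hprod _ _ z H1 H2 Uz1) as [N HN].
        apply (proj2 (proj2 (Hq' N))). apply HN; lia. }
    assert (HWA : W (fun w => ~ A' w)).
    { apply NNPP; intro HnW.
      assert (Hm : forall k, exists m, DW k (a m) /\ a m <> x).
      { intro k. apply NNPP; intro Hk. apply HnW.
        apply (f_up W (DW k)); [|apply DWin].
        intros w hw [m [-> hm]]. apply Hk; eauto. }
      destruct (choice_nat _ Hm) as [m Hm'].
      destruct (classic (forall j, exists k, j <= k /\ j <= m k)) as [HA|HB].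
      - destruct (choice_nat _ HA) as [g Hg].
        assert (H1 : lim sigma (tailf (fun j => a (m (g j)))) z).
        { apply (lim_iso sigma z (tail_fle DWbase DWmono (s := fun j => a (m (g j)))
                    (fun j => DWmono j (g j) _ (proj1 (Hg j)) (proj1 (Hm' _))))).
          exact HWz. }
        assert (H2 : lim tau (tailf (fun j => b (m (g j)))) y).
        { apply Htb. intro j. apply (DBmono j (m (g j))); [|apply Hb].
          apply (Hg j). }
        destruct Vz as [[Uz1 _] _].
        destruct (Hprod _ _ z H1 H2 Uz1) as [N HN].
        apply (Hno (m (g N))). apply HN; lia.
      - assert (HB' : exists j, forall k, j <= k -> m k < j).
        { apply NNPP; intro Hn. apply HB. intro j. apply NNPP; intro Hj.
          apply Hn. exists j. intros k Hk. apply NNPP; intro Hmk.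
          apply Hj. exists k. split; auto; lia. }
        destruct HB' as [j Hj].
        assert (Hi : exists i, i < j /\ a i <> x /\ forall k, DW k (a i)).
        { apply NNPP; intro Hni.
          destruct (finite_max (fun i k => a i <> x -> ~ DW k (a i)) j) as [K0 HK].
          - intros i k k' hk h1 h2 h3. apply (h1 h2). apply (DWmono k k'); auto.
          - intros i hi. destruct (classic (a i = x)) as [e|ne].
            + exists 0. intros h; contradiction.
            + apply NNPP; intro hk. apply Hni. exists i. split; auto. split; auto.
              intro k. apply NNPP; intro hk'. apply hk. exists k. intros _; auto.
          - pose (k := max K0 j).
            apply (HK (m k)); [apply Hj; lia| apply (proj2 (Hm' k))|].
            apply (DWmono K0 k); [lia|]. apply (proj1 (Hm' k)). }
        destruct Hi as [i [_ [Hix Hid]]].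
        assert (Hpi : lim sigma (principal (a i)) z).
        { apply (lim_iso sigma z (F := W)); auto.
          intros A HA. destruct (DWbase A HA) as [n Hn]. apply Hn, Hid. }
        pose proof (Hh _ _ _ (Hsx _ _ Hpi) (lim_centered xi (a i))) as Heq.
        destruct Vz as [_ Vz2]. apply Vz2. exists i. auto. }
    assert (HWV' : W V) by (apply f_meet; auto).
    exact (HWV _ HWV' G HG). }
  assert (HVx : V x).
  { split; auto. intros [n [e ne]]. auto. }
  destruct (Hxt _ _ Hta V HVopen HVx) as [N HN].
  destruct HUx as [_ [M HM]].
  pose (n := N + M).
  destruct (HN n ltac:(lia)) as [_ HnA].
  assert (e : a n = x).
  { apply NNPP; intro ne. apply HnA. exists n; auto. }
  apply (Hno n). rewrite e. apply HM. lia.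
Qed.

Lemma open_anti (Z : Type) (a b : convergence Z) (O : Z -> Prop) :
  finer a b -> is_open b O -> is_open a O.
Proof. intros H HO F x Hl. apply HO, H, Hl. Qed.

Lemma prod_finer (X Y : Type) (a b : convergence X) (tau : convergence Y) :
  finer a b -> finer (prod_conv a tau) (prod_conv b tau).
Proof. intros H F p [h1 h2]. split; auto. Qed.

Lemma I1_finer (X : Type) (xi : convergence X) : finer (I1 xi) xi.
Proof. intros F x [H [_ [HF Hl]]]. exact (lim_iso xi x HF Hl). Qed.

Lemma cc_finer (X : Type) (s xi : convergence X) :
  countable_character s -> finer s xi -> finer s (I1 xi).
Proof.
  intros Hc Hf F x Hl. destruct (proj1 (Hc _ _) Hl) as [H [Hb [HF Hl']]].
  exists H; auto.
Qed.

Definition unit_conv : convergence unit.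
Proof. refine (@Convergence unit (fun _ _ => True) _ _); auto. Defined.

Lemma unit_cc : countable_character unit_conv.
Proof.
  intros F x; split; intros _; [|exact I].
  exists (principal tt). split; [|split; [|exact I]].
  - exists (fun _ z => z = tt). split; [reflexivity|].
    intros A HA. exists 0. intros z ->. exact HA.
  - intros A HA. apply (f_up F (fun _ => True)); [|apply f_full].
    intros [] _; exact HA.
Qed.

Lemma epi_T (X : Type) (s : convergence X) : finer (Epi_I1 s) (Tmod s).
Proof.
  intros F x [th [Hc Hl]] O HO Ox.
  assert (HO' : is_open (prod_conv s unit_conv) (fun p => O (fst p))).
  { intros G p [h1 _] hp. exact (HO _ _ h1 hp). }
  apply (proj1 (Hc _ _ unit_cc _)) in HO'.
  apply (HO' (fmap (fun z => (z, tt)) F) (x, tt)); [|exact Ox].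
  split; [|exact I]. apply (lim_iso th x (F := F)); [intros A h; exact h|exact Hl].
Qed.

Theorem proposition5p4 (X : Type) (xi : convergence X) :
  hausdorff xi ->
  (strongly_countably_S0_characterized xi <->
   countable_S0_character xi /\ strongly_sequential xi).
Proof.
  intros Hh. split.
  - intros [s [Hp [Hc [Hsx Hxe]]]]. split.
    + exists s; split; [exact Hp|split; [exact Hc|split; [exact Hsx|]]]. intros F0 x0 Hl0. apply epi_T, Hxe, Hl0.
    + intros F x Hl. destruct (Hxe _ _ Hl) as [th [Hcl Hth]].
      exists th; split; auto. intros Y tau Hct O. rewrite <- (Hcl Y tau Hct O).
      split.
      * apply open_anti, prod_finer, cc_finer; auto.
      * intros HO G p [h1 h2]. apply I1_finer in h1. apply Hxe in h1.
        destruct h1 as [th' [Hcl' Hl']].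
        apply (proj1 (Hcl' Y tau Hct O) HO). split; auto.
  - intros [[s [Hp [Hc [Hsx Hxt]]]] Hss]. exists s; split; [exact Hp|split; [exact Hc|split; [exact Hsx|]]].
    intros F x Hl. destruct (Hss _ _ Hl) as [th [Hcl Hth]].
    exists th; split; auto. intros Y tau Hct O. rewrite <- (Hcl Y tau Hct O).
    split.
    + apply hard; auto.
    + apply open_anti, prod_finer, cc_finer; auto.
Qed.
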